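(* Let $F,K\ge1$ and $0\le Z<F$ be integers such that $\frac{K(F-Z)}{Z+1}$ is an integer, and suppose an RPDA$(F,K,Z)$ exists. Then an RPDA$(F,\ell K,Z)$ exists for every integer $\ell\ge1$.
   Context: A placement delivery array $S$-PDA$(F,K,Z)$ is an $F\times K$ array $R=(r_{j,k})$, $1\le j\le F$, $1\le k\le K$, over a finite set $S$ such that: (1) each cell is either empty or contains an element of $S$; (2) each column contains exactly $Z$ empty cells; (3) each element of $S$ occurs at most once in each row and at most once in each column; (4) if two distinct nonempty cells satisfy $r_{j_1,k_1}=r_{j_2,k_2}=t\in S$, then the cells $r_{j_1,k_2}$ and $r_{j_2,k_1}$ are empty. An RPDA$(F,K,Z)$ (restricted PDA) is an $S$-PDA$(F,K,Z)$ with $|S|=\left\lceil\frac{K(F-Z)}{Z+1}\right\rceil$. *)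

(* Defs.v *)
From mathcomp Require Import all_boot.
Set Implicit Arguments.
Unset Strict Implicit.
Unset Printing Implicit Defensive.

Definition ceil_div (a b : nat) : nat := (a + b.-1) %/ b.

(* An S-PDA(F,K,Z) with |S| = s: rows 'I_F, columns 'I_K, a cell is either
   empty (None) or contains an element of S = 'I_s (Some t). *)
Definition is_PDA (F K Z s : nat) (R : 'I_F -> 'I_K -> option 'I_s) : Prop :=
  (forall k : 'I_K, #|[set j : 'I_F | R j k == None]| = Z) /\
  (forall (j : 'I_F) (k1 k2 : 'I_K) (t : 'I_s),
      R j k1 = Some t -> R j k2 = Some t -> k1 = k2) /\
  (forall (k : 'I_K) (j1 j2 : 'I_F) (t : 'I_s),
      R j1 k = Some t -> R j2 k = Some t -> j1 = j2) /\
  (forall (j1 j2 : 'I_F) (k1 k2 : 'I_K) (t : 'I_s),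
      (j1, k1) <> (j2, k2) -> R j1 k1 = Some t -> R j2 k2 = Some t ->
      R j1 k2 = None /\ R j2 k1 = None).

Definition RPDA_exists (F K Z : nat) : Prop :=
  exists R : 'I_F -> 'I_K -> option 'I_(ceil_div (K * (F - Z)) Z.+1),
    is_PDA Z R.

(* Main.v *)
Require Import Defs.
From mathcomp Require Import all_boot.
From mathcomp Require Import zify.

Lemma sym_lt (l K s c t : nat) : 0 < K -> c < l * K -> t < s ->
  c %/ K * s + t < l * s.
Proof.
move=> hK hc ht.
have hq : c %/ K < l by rewrite ltn_divLR.
apply: (@leq_trans ((c %/ K).+1 * s)); first by rewrite mulSn addnC ltn_add2r.
by rewrite leq_mul2r hq orbT.
Qed.

Lemma sym_inj (s a1 a2 t1 t2 : nat) : t1 < s -> t2 < s ->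
  a1 * s + t1 = a2 * s + t2 -> a1 = a2 /\ t1 = t2.
Proof.
move=> h1 h2 e.
have hs : 0 < s by case: s h1 {h2 e}.
have e1 := congr1 (fun x => x %/ s) e; have e2 := congr1 (fun x => x %% s) e.
move: e1 e2 => /=; rewrite !divnMDl // !modnMDl !divn_small // !modn_small //.
by rewrite !addn0.
Qed.

Lemma copies (F K Z s l : nat) (R : 'I_F -> 'I_K -> option 'I_s) :
  0 < K -> is_PDA Z R ->
  exists R' : 'I_F -> 'I_(l * K) -> option 'I_(l * s), is_PDA Z R'.
Proof.
move=> hK [H2 [H3r [H3c H4]]].
pose inner (c : 'I_(l * K)) : 'I_K := Ordinal (ltn_pmod c hK).
pose sym (c : 'I_(l * K)) (t : 'I_s) : 'I_(l * s) :=
  Ordinal (@sym_lt l K s c t hK (ltn_ord c) (ltn_ord t)).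
pose R' j c := match R j (inner c) with None => None | Some t => Some (sym c t) end.
have key : forall j c u, R' j c = Some u ->
    exists t : 'I_s, R j (inner c) = Some t /\ val u = c %/ K * s + t.
  move=> j c u; rewrite /R'; case: (R j (inner c)) => [t|] //= [<-].
  by exists t.
have eqc : forall c1 c2 : 'I_(l * K), c1 %/ K = c2 %/ K -> inner c1 = inner c2 -> c1 = c2.
  move=> c1 c2 e1 e2; apply: val_inj => /=.
  have := congr1 val e2 => /= e2'.
  by rewrite (divn_eq c1 K) (divn_eq c2 K) e1 e2'.
exists R'; split; [|split; [|split]].
- move=> c; rewrite -(H2 (inner c)); apply: eq_card => j; rewrite !inE /R'.
  by case: (R j (inner c)).
- move=> j c1 c2 u h1 h2.
  have [t1 [r1 v1]] := key _ _ _ h1; have [t2 [r2 v2]] := key _ _ _ h2.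
  have [ea et] := @sym_inj s _ _ _ _ (ltn_ord t1) (ltn_ord t2) (etrans (esym v1) v2).
  have et' : t1 = t2 by apply: val_inj.
  subst t2; apply: eqc => //; exact: (H3r _ _ _ _ r1 r2).
- move=> c j1 j2 u h1 h2.
  have [t1 [r1 v1]] := key _ _ _ h1; have [t2 [r2 v2]] := key _ _ _ h2.
  have [ea et] := @sym_inj s _ _ _ _ (ltn_ord t1) (ltn_ord t2) (etrans (esym v1) v2).
  have et' : t1 = t2 by apply: val_inj.
  subst t2; exact: (H3c _ _ _ _ r1 r2).
- move=> j1 j2 c1 c2 u hne h1 h2.
  have [t1 [r1 v1]] := key _ _ _ h1; have [t2 [r2 v2]] := key _ _ _ h2.
  have [ea et] := @sym_inj s _ _ _ _ (ltn_ord t1) (ltn_ord t2) (etrans (esym v1) v2).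
  have et' : t1 = t2 by apply: val_inj.
  subst t2.
  have hne' : (j1, inner c1) <> (j2, inner c2).
    move=> e; apply: hne.
    have ej : j1 = j2 by have := congr1 fst e.
    have ei : inner c1 = inner c2 by have := congr1 snd e.
    by rewrite ej (eqc _ _ ea ei).
  have [n1 n2] := H4 _ _ _ _ _ hne' r1 r2.
  by rewrite /R' n1 n2.
Qed.

Lemma ceil_div_exact (a b : nat) : 0 < b -> b %| a -> ceil_div a b = a %/ b.
Proof.
move=> hb /dvdnP [q ->]; rewrite /ceil_div mulnK // divnMDl // divn_small ?addn0 //.
by case: b hb.
Qed.

Theorem mainTheorem7 (F K Z : nat) :
  1 <= F -> 1 <= K -> Z < F -> Z.+1 %| K * (F - Z) ->
  RPDA_exists F K Z ->
  forall l : nat, 1 <= l -> RPDA_exists F (l * K) Z.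
Proof.
move=> hF hK hZ hd [R hR] l hl.
rewrite /RPDA_exists.
have -> : ceil_div (l * K * (F - Z)) Z.+1 = l * ceil_div (K * (F - Z)) Z.+1.
  rewrite !ceil_div_exact //; last by rewrite -mulnA dvdn_mull.
  by rewrite -mulnA muln_divA.
exact: copies hK hR.
Qed.
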